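(* Let $n\geq 3$. For $k\in\mathbb{N}$ let $\mathbb{D}_k:=\{2^{-j}:0\leq j\leq k\}$ and $$\mathscr{R}_k:=\Big\{[0,s_1]\times\cdots\times[0,s_{n-2}]\times\Big[0,\frac{2^{-(n-1)k}}{s_1\cdots s_{n-2}}\Big]: s_1,\dots,s_{n-2}\in\mathbb{D}_k\Big\}$$ (rectangles in $\mathbb{R}^{n-1}$), let $\mathscr{R}:=\bigcup_{k\in\mathbb{N}}\mathscr{R}_k$ and $\tilde{\mathscr{R}}:=\{R\times[0,1]:R\in\mathscr{R}\}$ (rectangles in $\mathbb{R}^n$). Then the projections of the rectangles of $\tilde{\mathscr{R}}$ onto the $x_{n-1}x_n$ coordinate plane form a family of finite width, and for every Orlicz function $\Phi$ with $\Phi=o(\Phi_{n-2})$ at $\infty$, $M_{\tilde{\mathscr{R}}}$ does not satisfy a weak $L^\Phi$ inequality.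
   Context: A family of rectangles has finite width if it is a finite union of subfamilies each totally ordered by inclusion. For measurable $f$, $M_{\tilde{\mathscr{R}}}f(x):=\sup\{\frac{1}{|R|}\int_{\tau(R)}|f|: R\in\tilde{\mathscr{R}},\ \tau\text{ a translation},\ x\in\tau(R)\}$, $|\cdot|$ being Lebesgue measure. An Orlicz function is a convex increasing $\Phi:[0,\infty)\to[0,\infty)$ with $\Phi(0)=0$; $M_{\tilde{\mathscr{R}}}$ satisfies a weak $L^\Phi$ inequality if there is $C>0$ with $|\{M_{\tilde{\mathscr{R}}}f>\lambda\}|\leq\int_{\mathbb{R}^n}\Phi(C|f|/\lambda)$ for all $\lambda>0$ and all measurable $f$ with $\Phi(|f|)\in L^1$. $\Phi_d(t):=t(1+\log_+^dt)$, $\log_+t=\max(\log t,0)$. *)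

(* Defs.v *)
From HB Require Import structures.
From mathcomp Require Import all_boot all_order all_algebra.
From mathcomp Require Import all_classical all_reals all_analysis.
Set Implicit Arguments. Unset Strict Implicit. Unset Printing Implicit Defensive.
Import Order.TTheory GRing.Theory Num.Theory.
Import numFieldNormedType.Exports.
Local Open Scope classical_set_scope.
Local Open Scope ring_scope.

(* R^n is modelled as n.-tuple R, with the product sigma-algebra generated by
   the coordinate maps (provided by MathComp-Analysis). *)

Definition box (R : realType) (n : nat) (a b : n.-tuple R) : set (n.-tuple R) :=
  [set x | forall i : 'I_n, tnth a i <= tnth x i <= tnth b i].

(* mu is n-dimensional Lebesgue measure: it gives every closed box its volume.
   (On the product sigma-algebra this characterizes Lebesgue measure.) *)
Definition is_lebesgue_measure (R : realType) (n : nat)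
    (mu : {measure set (n.-tuple R) -> \bar R}) : Prop :=
  forall a b : n.-tuple R, (forall i : 'I_n, tnth a i <= tnth b i) ->
    mu (box a b) = (\prod_(i < n) (tnth b i - tnth a i))%:E.

Definition translate (R : realType) (n : nat) (a : n.-tuple R)
    (A : set (n.-tuple R)) : set (n.-tuple R) :=
  [set x | exists2 y, A y & x = [tuple tnth y i + tnth a i | i < n]].

Definition maximal_op (R : realType) (n : nat)
    (mu : {measure set (n.-tuple R) -> \bar R}) (F : set (set (n.-tuple R)))
    (f : n.-tuple R -> R) (x : n.-tuple R) : \bar R :=
  ereal_sup [set v | exists A, exists a : n.-tuple R,
     [/\ F A, translate a A x &
         v = ((\int[mu]_(y in translate a A) (`|f y|)%:E)
               * ((fine (mu A))^-1)%:E)%E]].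

(* Orlicz function: convex, increasing (nondecreasing), Phi(0) = 0,
   [0,oo) -> [0,oo); values of Phi on negative reals are irrelevant. *)
Definition orlicz (R : realType) (Phi : R -> R) : Prop :=
  [/\ Phi 0 = 0,
      (forall t, 0 <= t -> 0 <= Phi t),
      (forall s t, 0 <= s -> s <= t -> Phi s <= Phi t) &
      (forall s t l, 0 <= s -> 0 <= t -> 0 <= l <= 1 ->
         Phi (l * s + (1 - l) * t) <= l * Phi s + (1 - l) * Phi t)].

Definition logp (R : realType) (t : R) : R := Num.max (ln t) 0.

Definition Phi_d (R : realType) (d : nat) (t : R) : R := t * (1 + logp t ^+ d).

Definition littleo_at_infty (R : realType) (Phi Psi : R -> R) : Prop :=
  forall eps : R, 0 < eps -> exists M : R, forall t, M <= t ->
    `|Phi t| <= eps * `|Psi t|.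

Definition weak_LPhi (R : realType) (n : nat)
    (mu : {measure set (n.-tuple R) -> \bar R}) (F : set (set (n.-tuple R)))
    (Phi : R -> R) : Prop :=
  exists2 C : R, 0 < C & forall (lam : R) (f : n.-tuple R -> R), 0 < lam ->
    measurable_fun setT f ->
    mu.-integrable setT (fun x => (Phi `|f x|)%:E) ->
    (mu [set x | (lam%:E < maximal_op mu F f x)%E]
       <= \int[mu]_x (Phi (C * `|f x| / lam))%:E)%E.

Definition finite_width (T : Type) (F : set (set T)) : Prop :=
  exists (m : nat) (G : nat -> set (set T)),
    F = \bigcup_(i in `I_m) G i /\
    (forall i, (i < m)%N -> forall A B, G i A -> G i B -> A `<=` B \/ B `<=` A).

(* (0-based coordinate indices i, j < n) *)
Definition proj_plane (R : realType) (n : nat) (i j : nat) (A : set (n.-tuple R))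
    : set (R * R) :=
  [set (nth 0 x i, nth 0 x j) | x in A].

(* side lengths of the rectangle in tilde-R_k with s_i = 2^-(js i), i < n-2:
   coordinates 0..n-3 : s_i ; coordinate n-2 : 2^{-(n-1)k}/(s_1...s_{n-2}) ;
   coordinate n-1 : 1 *)
Definition side (R : realType) (n k : nat) (js : nat -> nat) (i : nat) : R :=
  if (i < n - 2)%N then (2^-1) ^+ js i
  else if i == (n - 2)%N then
    (2^-1) ^+ ((n - 1) * k) / \prod_(l < n - 2) (2^-1) ^+ js l
  else 1.

Definition rect (R : realType) (n k : nat) (js : nat -> nat) : set (n.-tuple R) :=
  [set x | forall i : 'I_n, 0 <= tnth x i <= @side R n k js i].

Definition Rtilde (R : realType) (n : nat) : set (set (n.-tuple R)) :=
  [set A | exists (k : nat) (js : nat -> nat),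
     (forall i, (i < n - 2)%N -> (js i <= k)%N) /\ A = @rect R n k js].

(* Main.v *)
Require Import Defs.
From HB Require Import structures.
From mathcomp Require Import all_boot all_order all_algebra.
From mathcomp Require Import all_classical all_reals all_analysis.
From mathcomp Require Import lra zify ring.
From mathcomp Require Import measurable_realfun.
Set Implicit Arguments. Unset Strict Implicit.
Import Order.TTheory GRing.Theory Num.Theory.
Local Open Scope classical_set_scope.
Local Open Scope ring_scope.

Ltac noMM t := lazymatch t with
 | context [Order.min _ _] => fail | context [Order.max _ _] => fail | _ => idtac end.
Ltac stepMM := match goal with
 | |- context [Order.min ?a ?b] => noMM a; noMM b; case: (leP a b) => ?
 | |- context [Order.max ?a ?b] => noMM a; noMM b; case: (leP a b) => ? end.

Section EL. Variable R : realType.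
Definition ell (s q a : R) := Num.max 0 (Num.min q (a + s) - Num.max 0 a).
Definition tent (s q a : R) := Num.min (q - a) (a + s).
Definition astar (s q x : R) := Num.min x (Num.max (x - s) ((q - s) / 2)).
Lemma ellE s q a : ell s q a = Num.max 0 (Num.min (Num.min q s) (tent s q a)).
Proof. rewrite /ell /tent. repeat stepMM; lra. Qed.
Lemma tent_opt s q x a : 0 <= s -> x - s <= a -> a <= x ->
  tent s q a <= tent s q (astar s q x).
Proof. move=> *; rewrite /tent /astar. repeat stepMM; lra. Qed.
Lemma mono_mm (c u v : R) : u <= v -> Num.max 0 (Num.min c u) <= Num.max 0 (Num.min c v).
Proof. move=> *. repeat stepMM; lra. Qed.
Lemma astar_opt s q x a : 0 <= s -> x - s <= a -> a <= x ->
  ell s q a <= ell s q (astar s q x).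
Proof. by move=> *; rewrite !ellE; apply: mono_mm; apply: tent_opt. Qed.
Lemma astar_in s q x : 0 <= s -> x - s <= astar s q x <= x.
Proof. move=> *; rewrite /astar; repeat stepMM; lra. Qed.
Lemma ell_ge0 s q a : 0 <= ell s q a.
Proof. by rewrite /ell le_max lexx. Qed.
End EL.
Arguments ell {R}. Arguments astar {R}. Arguments tent {R}.
Arguments astar_in {R}. Arguments astar_opt {R}. Arguments ell_ge0 {R}.

Section P1.
Variable R : realType.

Lemma side_gt0 n k js i : 0 < @side R n k js i.
Proof.
rewrite /side; case: ifP => _; first by rewrite exprn_gt0 // invr_gt0.
case: ifP => _ //; apply: divr_gt0; first by rewrite exprn_gt0 // invr_gt0.
by apply: prodr_gt0 => l _; rewrite exprn_gt0 // invr_gt0.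
Qed.

Lemma proj_sub n (hn : (3 <= n)%N) k js k' js' :
  @side R n k js (n-2) <= @side R n k' js' (n-2) ->
  proj_plane (n-2) (n-1) (@rect R n k js) `<=` proj_plane (n-2) (n-1) (@rect R n k' js').
Proof.
move=> hs [u v] [x hx] [<- <-].
have hn2 : (n - 2 < n)%N by lia.
have hn1 : (n - 1 < n)%N by lia.
exists [tuple if (i < n - 2)%N then 0 else tnth x i | i < n].
  move=> i; rewrite tnth_mktuple.
  case: ifP => hi; first by rewrite lexx (ltW (side_gt0 _ _ _ _)).
  have := hx i; rewrite /side hi.
  case: ifP => hi2 //.
  move=> /andP[h1 h2]; rewrite h1 /= /side ?hi ?hi2; apply: le_trans h2 _.
  by move: hs; rewrite /side ltnn eqxx.
congr pair.
  rewrite -(tnth_nth 0 _ (Ordinal hn2)) tnth_mktuple /= ltnn.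
  by rewrite (tnth_nth 0).
rewrite -(tnth_nth 0 _ (Ordinal hn1)) tnth_mktuple /=.
have -> : (n - 1 < n - 2)%N = false.
  by apply/negbTE; lia.
by rewrite (tnth_nth 0).
Qed.

Lemma part1 n (hn : (3 <= n)%N) :
  finite_width [set @proj_plane R n (n - 2) (n - 1) A | A in @Rtilde R n].
Proof.
exists 1%N, (fun _ => [set @proj_plane R n (n - 2) (n - 1) A | A in @Rtilde R n]).
split.
  apply/seteqP; split => [P hP|P [i _ hP] //].
  by exists 0%N => //.
move=> i _ A B [A' [k [js [_ ->]]] <-] [B' [k' [js' [_ ->]]] <-].
case: (leP (@side R n k js (n-2)) (@side R n k' js' (n-2))) => h.
  by left; apply: proj_sub.
by right; apply: proj_sub => //; apply: ltW.
Qed.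
End P1.

Section S.
Variable R : realType.
Variable n : nat.
Definition mkt (f : 'I_n -> R) : n.-tuple R := [tuple f i | i < n].

Lemma box_meas (a b : n.-tuple R) : measurable (box a b).
Proof.
have -> : box a b = \bigcap_(i in [set: 'I_n]) ((fun x : n.-tuple R => tnth x i) @^-1` `[tnth a i, tnth b i]).
  apply/seteqP; split => x /=.
    by move=> hx i _ /=; rewrite in_itv /=; apply: hx.
  by move=> hx i; have := hx i Logic.I; rewrite /= in_itv.
apply: fin_bigcap_measurable => [|i _]; first exact: finite_finset.
rewrite -[X in measurable X]setTI; apply: measurable_tnth => //.
Qed.

Lemma translate_box (a lo hi : n.-tuple R) :
  translate a (box lo hi) =
  box (mkt (fun i => tnth lo i + tnth a i)) (mkt (fun i => tnth hi i + tnth a i)).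
Proof.
apply/seteqP; split => x /=.
  move=> [y hy ->] i; rewrite !tnth_mktuple !lerD2r; exact: hy.
move=> hx; exists (mkt (fun i => tnth x i - tnth a i)).
  move=> i; have := hx i; rewrite !tnth_mktuple => /andP[h1 h2].
  by rewrite lerBrDr h1 lerBlDr h2.
by apply: eq_from_tnth => i; rewrite !tnth_mktuple subrK.
Qed.

Lemma boxI (a b c e : n.-tuple R) :
  box a b `&` box c e =
  box (mkt (fun i => Num.max (tnth a i) (tnth c i)))
      (mkt (fun i => Num.min (tnth b i) (tnth e i))).
Proof.
apply/seteqP; split => x /=.
  move=> [h1 h2] i; rewrite !tnth_mktuple ge_max le_min.
  by case/andP: (h1 i) => -> ->; case/andP: (h2 i) => -> ->.
move=> h; split => i; have := h i; rewrite !tnth_mktuple ge_max le_min.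
  by case/andP => /andP[-> _] /andP[-> _].
by case/andP => /andP[_ ->] /andP[_ ->].
Qed.

Variable mu : {measure set (n.-tuple R) -> \bar R}.
Hypothesis hmu : is_lebesgue_measure mu.

Lemma mu_box (a b : n.-tuple R) :
  mu (box a b) = (\prod_(i < n) Num.max 0 (tnth b i - tnth a i))%:E.
Proof.
case: (pselect (forall i : 'I_n, tnth a i <= tnth b i)) => h.
  rewrite hmu //; congr EFin; apply: eq_bigr => i _.
  by rewrite max_r // subr_ge0.
have [i hi] : exists i, ~ (tnth a i <= tnth b i).
  by apply: contra_notP h => hh i; apply: contra_notP hh => hh; exists i.
have -> : box a b = set0.
  apply/seteqP; split => x //= hx; apply: hi; have /andP[h1 h2] := hx i.
  exact: le_trans h2.
rewrite measure0 (bigD1 i) //= max_l ?mul0r //.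
by rewrite subr_le0; apply: ltW; rewrite ltNge; apply/negP.
Qed.

Lemma rect_box k js :
  @rect R n k js = box (mkt (fun=> 0)) (mkt (fun i => @side R n k js i)).
Proof.
by apply/seteqP; split => x hx i; have := hx i; rewrite !tnth_mktuple.
Qed.

Definition vol k js := \prod_(i < n) @side R n k js i.

Lemma vol_gt0 k js : 0 < vol k js.
Proof. by apply: prodr_gt0 => i _; apply: side_gt0. Qed.

Lemma mu_rect k js : mu (@rect R n k js) = (vol k js)%:E.
Proof.
rewrite rect_box mu_box; congr EFin; apply: eq_bigr => i _.
by rewrite !tnth_mktuple subr0 max_r // ltW // side_gt0.
Qed.

Variables (dl h : R).
Hypothesis dl_gt0 : 0 < dl.
Hypothesis h_gt0 : 0 < h.
Definition Qb := box (mkt (fun=> 0)) (mkt (fun=> dl)).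
Definition ff (x : n.-tuple R) := h * \1_Qb x.

Lemma ff_abs y : `|ff y| = h * \1_Qb y.
Proof. by rewrite /ff ger0_norm // mulr_ge0 ?(ltW h_gt0) // indicE ?ler0n. Qed.

Lemma value k js a :
  ((\int[mu]_(y in translate a (@rect R n k js)) (`|ff y|)%:E)
     * ((fine (mu (@rect R n k js)))^-1)%:E)%E
  = (h * (\prod_(i < n) ell (@side R n k js i) dl (tnth a i)) / vol k js)%:E.
Proof.
have mD : measurable (translate a (@rect R n k js)).
  by rewrite rect_box translate_box; apply: box_meas.
under eq_integral => y _ do rewrite ff_abs.
rewrite (@integralZl_indic _ _ _ mu _ mD (fun=> Qb) h) //; last first.
  exact: box_meas.
  by move=> /lt_le_trans /(_ (ltW h_gt0)); rewrite ltxx.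
rewrite integral_indic //; last exact: box_meas.
rewrite mu_rect /= rect_box translate_box boxI mu_box -!EFinM; congr EFin.
congr (_ * _ / _); apply: eq_bigr => i _.
by rewrite !tnth_mktuple /ell add0r (addrC (tnth a i)).
Qed.

Variable lam : R.

Definition W k js (x : n.-tuple R) :=
  h * (\prod_(i < n) ell (@side R n k js i) dl (astar (@side R n k js i) dl (tnth x i)))
    / vol k js.

Lemma level_iff x :
  (lam%:E < maximal_op mu (@Rtilde R n) ff x)%E <->
  exists k js, (forall i, (i < n - 2)%N -> (js i <= k)%N) /\ lam < W k js x.
Proof.
rewrite /maximal_op; split.
  move/ereal_sup_gtP => [y [A [a [[k [js [hjs ->]]] hx ->]]]].
  rewrite value lte_fin => hl; exists k, js; split => //.
  apply: lt_le_trans hl _.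
  rewrite /W ler_pM2r ?invr_gt0 ?vol_gt0 // ler_pM2l //.
  apply: ler_prod => i _; rewrite ell_ge0 /=; apply: astar_opt.
  - exact/ltW/side_gt0.
  - move: hx; rewrite rect_box translate_box => /(_ i); rewrite !tnth_mktuple.
    by move=> /andP[_ h2]; rewrite lerBlDr addrC.
  - move: hx; rewrite rect_box translate_box => /(_ i); rewrite !tnth_mktuple.
    by move=> /andP[h1 _]; rewrite add0r in h1.
move=> [k [js [hjs hl]]]; apply/ereal_sup_gtP; exists (W k js x)%:E; last first.
  by rewrite lte_fin.
exists (@rect R n k js), (mkt (fun i => astar (@side R n k js i) dl (tnth x i))).
split; first by exists k, js.
  rewrite rect_box translate_box => i; rewrite !tnth_mktuple add0r.
  have /andP[h1 h2] := astar_in (side R n k js i) dl (tnth x i) (ltW (side_gt0 R n k js i)).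
  by rewrite h2 /= addrC -lerBlDr h1.
rewrite value /W; congr (EFin (_ * _ / _)); apply: eq_bigr => i _.
by rewrite tnth_mktuple.
Qed.

Lemma W_meas k js : measurable_fun setT (W k js).
Proof.
rewrite /W.
apply: (@measurable_funM _ _ _ _ (fun x => h * \prod_(i < n) ell (@side R n k js i) dl
   (astar (@side R n k js i) dl (tnth x i))) (cst (vol k js)^-1)); last first.
  exact: measurable_cst.
apply: (@measurable_funM _ _ _ _ (cst h)); first exact: measurable_cst.
apply: measurable_prod => i _.
apply: (@measurableT_comp _ _ _ _ _ _ (fun y => ell (@side R n k js i) dl
   (astar (@side R n k js i) dl y))); last exact: measurable_tnth.
set s := side _ _ _ _ _.
rewrite /ell /astar.
apply: (@measurable_maxr _ _ _ _ (cst 0)); first exact: measurable_cst.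
apply: measurable_funB.
  apply: (@measurable_minr _ _ _ _ (cst dl)); first exact: measurable_cst.
  apply: measurable_funD; last exact: measurable_cst.
  apply: measurable_minr; first exact: measurable_id.
  apply: measurable_maxr; last exact: measurable_cst.
  apply: measurable_funB; [exact: measurable_id | exact: measurable_cst].
apply: (@measurable_maxr _ _ _ _ (cst 0)); first exact: measurable_cst.
apply: measurable_minr; first exact: measurable_id.
apply: measurable_maxr; last exact: measurable_cst.
apply: measurable_funB; [exact: measurable_id | exact: measurable_cst].
Qed.

Lemma Wset_meas k js : measurable [set x | lam < W k js x].
Proof.
have := @W_meas k js measurableT _ (measurable_itv `]lam, +oo[); rewrite setTI.
by congr measurable; apply/seteqP; split => x /=; rewrite in_itv /= andbT.
Qed.

Definition jsT k (t : (n - 2).-tuple 'I_k.+1) : nat -> nat :=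
  fun l => nth 0%N (map val t) l.
Arguments jsT {k}.

Lemma side_ext k js js' : (forall l, (l < n - 2)%N -> js l = js' l) ->
  @side R n k js = @side R n k js'.
Proof.
move=> e; apply: funext => i; rewrite /side; case: ifP => hi; first by rewrite e.
case: ifP => // _; congr (_ / _); apply: eq_bigr => l _; rewrite e //.
Qed.

Lemma jsT_val k (t : (n - 2).-tuple 'I_k.+1) l (hl : (l < n - 2)%N) :
  jsT t l = val (tnth t (Ordinal hl)).
Proof. by rewrite /jsT (nth_map ord0) ?size_tuple // (tnth_nth ord0). Qed.

Lemma level_meas : measurable [set x | (lam%:E < maximal_op mu (@Rtilde R n) ff x)%E].
Proof.
have -> : [set x | (lam%:E < maximal_op mu (@Rtilde R n) ff x)%E] =
  \bigcup_(k in [set: nat]) \bigcup_(t in [set: (n - 2).-tuple 'I_k.+1])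
     [set x | lam < W k (jsT t) x].
  apply/seteqP; split => x.
    move/level_iff => [k [js [hjs hl]]]; exists k => //.
    exists [tuple (inord (js i) : 'I_k.+1) | i < n - 2] => //=.
    rewrite /W /vol; suff -> : @side R n k (jsT [tuple (inord (js i) : 'I_k.+1) | i < n - 2]) = @side R n k js.
      by [].
    apply: side_ext => l hl2; rewrite (jsT_val _ hl2) tnth_mktuple /= inordK //.
    by rewrite ltnS; apply: hjs.
  move=> [k _ [t _ hl]]; apply/level_iff; exists k, (jsT t); split => // i hi.
  by rewrite (jsT_val _ hi) -ltnS; apply: ltn_ord.
apply: bigcup_measurable => k _; apply: fin_bigcup_measurable => [|t _].
  exact: finite_finset.
exact: Wset_meas.
Qed.

Lemma level_intro k js a x : (forall i, (i < n - 2)%N -> (js i <= k)%N) ->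
  translate a (@rect R n k js) x ->
  lam < h * (\prod_(i < n) ell (@side R n k js i) dl (tnth a i)) / vol k js ->
  (lam%:E < maximal_op mu (@Rtilde R n) ff x)%E.
Proof.
move=> hjs hx hl; apply/ereal_sup_gtP.
exists (h * (\prod_(i < n) ell (@side R n k js i) dl (tnth a i)) / vol k js)%:E.
  by exists (@rect R n k js), a; split => //; [exists k, js | rewrite value].
by rewrite lte_fin.
Qed.

Lemma Qb_meas : measurable Qb.
Proof. exact: box_meas. Qed.

Lemma mu_Qb : mu Qb = (dl ^+ n)%:E.
Proof.
rewrite /Qb mu_box; congr EFin.
rewrite (eq_bigr (fun=> dl)) ?prodr_const ?card_ord // => i _.
by rewrite !tnth_mktuple subr0 max_r // ltW.
Qed.

Lemma ff_meas : measurable_fun setT ff.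
Proof.
apply: (@measurable_funM _ _ _ _ (cst h)); first exact: measurable_cst.
exact: measurable_indic Qb_meas.
Qed.

Lemma F_ff (F : R -> R) x : F 0 = 0 -> F `|ff x| = F h * \1_Qb x.
Proof.
move=> F0; rewrite ff_abs indicE; case: (x \in Qb) => /=.
  by rewrite !mulr1.
by rewrite !mulr0 F0.
Qed.

Lemma int_cst_indic c : 0 <= c ->
  (\int[mu]_x (c * \1_Qb x)%:E = (c * dl ^+ n)%:E)%E.
Proof.
move=> hc.
rewrite (@integralZl_indic _ _ _ mu _ measurableT (fun=> Qb) c) //; last first.
  exact: Qb_meas.
  by move=> hlt; exfalso; move: hlt; rewrite ltNge hc.
rewrite integral_indic //; last exact: Qb_meas.
have -> : Qb `&` [set: n.-tuple R] = Qb by apply/seteqP; split => [x []|x] //.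
by rewrite mu_Qb -EFinM.
Qed.

Lemma integrable_cst_indic c : mu.-integrable setT (fun x => (c * \1_Qb x)%:E).
Proof.
apply/integrableP; split.
  apply/measurable_EFinP; apply: (@measurable_funM _ _ _ _ (cst c)).
    exact: measurable_cst.
  exact: measurable_indic Qb_meas.
under eq_integral => x _ do rewrite abse_EFin normrM (ger0_norm (x:=\1_Qb x)) ?indicE ?ler0n // -indicE.
by rewrite int_cst_indic // ltry.
Qed.
End S.

Section Sp.
Variable R : realType.
Variable d : nat.
Let u : R := 2^-1.

Lemma u_gt0 : 0 < u. Proof. by rewrite /u invr_gt0. Qed.
Lemma u_le1 : u <= 1. Proof. rewrite /u; lra. Qed.

Lemma e2 : (d.+2 - 2 = d)%N. Proof. by lia. Qed.
Lemma e1 : (d.+2 - 1 = d.+1)%N. Proof. by lia. Qed.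

Lemma side_lt K js (i : nat) : (i < d)%N -> @side R d.+2 K js i = u ^+ js i.
Proof. by move=> hi; rewrite /side e2 hi. Qed.

Lemma side_d K js : @side R d.+2 K js d = u ^+ (d.+1 * K) / \prod_(l < d) u ^+ js l.
Proof. by rewrite /side e2 e1 ltnn eqxx. Qed.

Lemma side_last K js : @side R d.+2 K js d.+1 = 1.
Proof.
rewrite /side e2 ltnNge leqnSn /=.
by have -> : (d.+1 == d) = false by apply/negbTE; rewrite neq_ltn ltnSn orbT.
Qed.

Lemma prod_js_gt0 js : 0 < \prod_(l < d) u ^+ js l.
Proof. by apply: prodr_gt0 => l _; rewrite exprn_gt0 // u_gt0. Qed.

Lemma vol_eq K js : vol R d.+2 K js = u ^+ (d.+1 * K).
Proof.
rewrite /vol big_ord_recr big_ord_recr /= side_last side_d mulr1.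
rewrite (eq_bigr (fun l : 'I_d => u ^+ js l)); last first.
  by move=> l _; rewrite side_lt.
by rewrite mulrCA divff ?mulr1 // gt_eqF // prod_js_gt0.
Qed.

Lemma side_ge K js : (forall i, (i < d)%N -> (js i <= K)%N) ->
  forall i : 'I_d.+2, u ^+ (d.+1 * K) <= @side R d.+2 K js i.
Proof.
move=> hjs i.
have hu0 : 0 <= u by apply/ltW/u_gt0.
case: (ltngtP i d) => hi.
- rewrite side_lt //; apply: ler_wiXn2l => //; first exact: u_le1.
  by apply: leq_trans (hjs _ hi) _; rewrite leq_pmull.
- have -> : nat_of_ord i = d.+1 by have := ltn_ord i; lia.
  by rewrite side_last exprn_ile1 // u_le1.
- rewrite hi side_d ler_pdivlMr ?prod_js_gt0 // ler_piMr //.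
    by rewrite exprn_ge0.
  by apply: prodr_ile1 => l _; rewrite exprn_ge0 //= exprn_ile1 // u_le1.
Qed.

Variable mu : {measure set ((d.+2).-tuple R) -> \bar R}.
Hypothesis hmu : is_lebesgue_measure mu.
Variable K : nat.
Let E := (d.+1 * K)%N.
Let dl : R := u ^+ E.
Let m := (E * d.+1)%N.
Let h : R := 2 ^+ m.+1.

Lemma dl_gt0 : 0 < dl. Proof. by rewrite exprn_gt0 // u_gt0. Qed.
Lemma h_gt0 : 0 < h. Proof. by rewrite exprn_gt0. Qed.

Lemma h_dl : h * dl ^+ d.+1 = 2.
Proof.
rewrite /h /dl -exprM -/m exprS -mulrA -exprMn /u divff ?expr1n ?mulr1 //.
Qed.

Definition Gb (e : (d.+2 - 2).-tuple 'I_K.+1) : set ((d.+2).-tuple R) :=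
  box (mkt (fun i : 'I_d.+2 => @side R d.+2 K (jsT e) i / 2))
      (mkt (fun i : 'I_d.+2 => @side R d.+2 K (jsT e) i * (3 / 4))).

Lemma jsT_le2 (e : (d.+2 - 2).-tuple 'I_K.+1) i : (i < d.+2 - 2)%N -> (jsT e i <= K)%N.
Proof.
move=> hi2.
by rewrite (@jsT_val d.+2 K e i hi2) -ltnS; apply: ltn_ord.
Qed.

Lemma jsT_le (e : (d.+2 - 2).-tuple 'I_K.+1) i : (i < d)%N -> (jsT e i <= K)%N.
Proof. by move=> hi; apply: jsT_le2; rewrite e2. Qed.

Lemma Gb_level e x : Gb e x ->
  (1%:E < maximal_op mu (@Rtilde R d.+2) (ff dl h) x)%E.
Proof.
move=> hx.
apply: (level_intro hmu h_gt0 (k:=K) (js:=jsT e) (a:=mkt (fun=> 0))).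
- exact: jsT_le2.
- rewrite rect_box translate_box => i; rewrite !tnth_mktuple !addr0.
  have := hx i; rewrite !tnth_mktuple.
  have := side_gt0 R d.+2 K (jsT e) i; lra.
rewrite vol_eq -/E -/dl.
rewrite (eq_bigr (fun=> dl)); last first.
  move=> i _; rewrite tnth_mktuple /ell add0r maxxx subr0.
  rewrite min_l; last exact: (side_ge (@jsT_le e)).
  by rewrite max_r // ltW // dl_gt0.
rewrite prodr_const card_ord exprS mulrCA (mulrC dl) mulrK ?h_dl; last first.
  by rewrite unitfE gt_eqF // dl_gt0.
lra.
Qed.

Lemma mu_Gb e : mu (Gb e) = (dl / 4 ^+ d.+2)%:E.
Proof.
rewrite mu_box //; congr EFin.
rewrite (eq_bigr (fun i : 'I_d.+2 => @side R d.+2 K (jsT e) i * 4^-1)); last first.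
  move=> i _; rewrite !tnth_mktuple max_r; last first.
    have := side_gt0 R d.+2 K (jsT e) i; lra.
  lra.
rewrite big_split /= prodr_const card_ord -/(vol R d.+2 K (jsT e)) vol_eq.
by rewrite /dl /E; congr (_ * _); apply: exprVn.
Qed.

Lemma disj_aux (a b : nat) (y : R) : (a < b)%N -> u ^+ a / 2 <= y -> y <= u ^+ b * (3 / 4) -> False.
Proof.
move=> hab h1 h2.
have hp : 0 < u ^+ a by rewrite exprn_gt0 // u_gt0.
have hq : u ^+ b <= u ^+ a / 2.
  have -> : u ^+ a / 2 = u ^+ a.+1 by rewrite exprSr.
  by apply: ler_wiXn2l => //; [exact/ltW/u_gt0 | exact: u_le1].
lra.
Qed.

Let T := (d.+2 - 2).-tuple 'I_K.+1.
Let M := #|{: T}|.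
Definition G := \big[setU/set0]_(j < M) Gb (enum_val j).

Lemma M_eq : M = (K.+1 ^ d)%N.
Proof. by rewrite /M card_tuple card_ord e2. Qed.

Lemma G_disj : trivIset [set: 'I_M] (fun j => Gb (enum_val j)).
Proof.
apply/trivIsetP => i j _ _ hij; apply/seteqP; split => // x [h1 h2]; exfalso.
have hne : enum_val i != enum_val j :> T.
  by apply: contra hij => /eqP/enum_val_inj ->.
have : ~ (forall l, tnth (enum_val i : T) l = tnth (enum_val j : T) l).
  by move=> hall; move/negP: hne; apply; apply/eqP/eq_from_tnth.
move/existsNP => [l hl].
have hlt : (l < d.+2)%N by have := ltn_ord l; lia.
have hld : (l < d)%N by have := ltn_ord l; lia.
have := h1 (Ordinal hlt); have := h2 (Ordinal hlt); rewrite !tnth_mktuple /=.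
rewrite !side_lt // !(@jsT_val d.+2 K _ l (ltn_ord l)).
have -> : Ordinal (ltn_ord l) = l by apply: val_inj.
set a := \val (tnth (enum_val i) l); set b := \val (tnth (enum_val j) l).
move=> /andP[hb1 hb2] /andP[ha1 ha2].
have hab : a != b by apply/eqP => /val_inj.
case: (ltngtP a b) => hc.
- exact: (disj_aux hc ha1 hb2).
- exact: (disj_aux hc hb1 ha2).
- by rewrite hc eqxx in hab.
Qed.

Lemma G_meas : measurable G.
Proof. by apply: bigsetU_measurable => j _; apply: box_meas. Qed.

Lemma mu_G : mu G = (M%:R * (dl / 4 ^+ d.+2))%:E.
Proof.
rewrite /G measure_bigsetU_ord; last exact: G_disj.
  rewrite (eq_bigr (fun=> (dl / 4 ^+ d.+2)%:E)); last by move=> j _; apply: mu_Gb.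
  by rewrite sumEFin sumr_const card_ord mulr_natl.
by move=> j; apply: box_meas.
Qed.

Lemma G_level : G `<=` [set x | (1%:E < maximal_op mu (@Rtilde R d.+2) (ff dl h) x)%E].
Proof.
rewrite /G; apply: (big_ind (fun S => S `<=` _)) => //.
  by move=> A B hA hB x [/hA|/hB].
by move=> j _ x hx; exact: Gb_level hx.
Qed.

Lemma weak_consequence (Phi : R -> R) C : orlicz Phi -> 0 < C ->
  (forall (lam : R) (f : (d.+2).-tuple R -> R), 0 < lam ->
    measurable_fun setT f ->
    mu.-integrable setT (fun x => (Phi `|f x|)%:E) ->
    (mu [set x | (lam%:E < maximal_op mu (@Rtilde R d.+2) f x)%E]
       <= \int[mu]_x (Phi (C * `|f x| / lam))%:E)%E) ->
  M%:R * (dl / 4 ^+ d.+2) <= Phi (C * h) * dl ^+ d.+2.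
Proof.
move=> [Phi0 Phi_ge0 _ _] hC H.
have hint : mu.-integrable setT (fun x : (d.+2).-tuple R => (Phi `|ff dl h x|)%:E).
  have -> : (fun x : (d.+2).-tuple R => (Phi `|ff dl h x|)%:E) = (fun x : (d.+2).-tuple R => (Phi h * \1_(Qb dl) x)%:E).
    by apply: funext => x; rewrite (F_ff dl h_gt0 x Phi0).
  exact: (integrable_cst_indic hmu dl_gt0).
have := H 1 (ff dl h) ltr01 (ff_meas dl h) hint.
have -> : (fun x : (d.+2).-tuple R => (Phi (C * `|ff dl h x| / 1))%:E) =
          (fun x : (d.+2).-tuple R => (Phi (C * h / 1) * \1_(Qb dl) x)%:E).
  apply: funext => x; rewrite (@F_ff R d.+2 dl h h_gt0 (fun t => Phi (C * t / 1)) x) //.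
  by rewrite mulr0 mul0r.
rewrite (int_cst_indic hmu dl_gt0); last first.
  by apply: Phi_ge0; rewrite divr1 mulr_ge0 // ltW // h_gt0.
rewrite divr1 => hle; rewrite -lee_fin -mu_G.
apply: le_trans hle.
apply: (@le_measure _ _ _ mu G _ (mem_set G_meas)).
  exact: (mem_set (level_meas hmu dl h_gt0 1)).
exact: G_level.
Qed.

Lemma key1 (Phi : R -> R) C : orlicz Phi -> 0 < C ->
  (forall (lam : R) (f : (d.+2).-tuple R -> R), 0 < lam ->
    measurable_fun setT f ->
    mu.-integrable setT (fun x => (Phi `|f x|)%:E) ->
    (mu [set x | (lam%:E < maximal_op mu (@Rtilde R d.+2) f x)%E]
       <= \int[mu]_x (Phi (C * `|f x| / lam))%:E)%E) ->
  M%:R * h <= 2 * 4 ^+ d.+2 * Phi (C * h).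
Proof.
move=> hP hC H; have := weak_consequence hP hC H.
have hdl := dl_gt0; have hh := h_gt0.
have h4 : 0 < (4 : R) ^+ d.+2 by rewrite exprn_gt0.
have e : dl ^+ d.+2 = dl * (2 / h).
  by rewrite exprS -h_dl [h * _]mulrC mulfK // gt_eqF.
rewrite e => hle.
have E1 : M%:R * (dl / 4 ^+ d.+2) = M%:R / 4 ^+ d.+2 * dl by ring.
have E2 : Phi (C * h) * (dl * (2 / h)) = 2 * Phi (C * h) / h * dl by ring.
have : M%:R / 4 ^+ d.+2 * dl <= 2 * Phi (C * h) / h * dl by rewrite -E1 -E2.
rewrite ler_pM2r // ler_pdivrMr // => hle2.
have E3 : 2 * Phi (C * h) / h * 4 ^+ d.+2 = 2 * 4 ^+ d.+2 * Phi (C * h) / h by ring.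
by rewrite -ler_pdivlMr // -E3.
Qed.

Lemma m_le : (m.+1 <= (d.+1 ^ 2 * K.+1))%N.
Proof. rewrite /m /E; nia. Qed.

Lemma K_lt_h : (K%:R : R) < h.
Proof.
have hK : (K < 2 ^ m.+1)%N.
  apply: leq_ltn_trans (ltn_expl _ (ltnSn 1)).
  rewrite /m /E; nia.
by rewrite /h -natrX ltr_nat.
Qed.

Definition Bc (C : R) : R := `|ln C| + 2 * ((d.+1 ^ 2)%N)%:R.

Lemma Bc_ge1 C : 1 <= Bc C.
Proof.
rewrite /Bc; have : (1 <= ((d.+1 ^ 2)%N)%:R :> R) by rewrite ler1n expn_gt0.
have := normr_ge0 (ln C); lra.
Qed.

Lemma logp_bound C : 0 < C -> logp (C * h) <= Bc C * K.+1%:R.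
Proof.
move=> hC; have hB := Bc_ge1 C.
have hK1 : (1 <= K.+1%:R :> R) by rewrite ler1n.
rewrite /logp ge_max; apply/andP; split; last first.
  by rewrite mulr_ge0 // ?ler0n //; lra.
rewrite lnM ?posrE ?h_gt0 // /h lnXn //.
have l2 : ln (2 : R) <= 2 by apply/ltW/ln_sublinear.
have l2' : 0 <= ln (2 : R) by apply: ln_ge0; rewrite ler1n.
have hm : (m.+1%:R <= ((d.+1 ^ 2)%N)%:R * K.+1%:R :> R).
  by rewrite -natrM ler_nat m_le.
have e1 : ln (2 : R) *+ m.+1 = ln 2 * m.+1%:R by rewrite mulr_natr.
rewrite e1 /Bc.
have h1 : ln C <= `|ln C| * K.+1%:R.
  apply: le_trans (ler_norm _) _; rewrite ler_peMr //.
have h2 : ln (2 : R) * m.+1%:R <= 2 * (((d.+1 ^ 2)%N)%:R * K.+1%:R).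
  apply: le_trans (_ : ln 2 * (((d.+1 ^ 2)%N)%:R * K.+1%:R) <= _).
    by rewrite ler_wpM2l.
  by rewrite ler_wpM2r // mulr_ge0 ?ler0n.
rewrite mulrDl; rewrite mulrA in h2; lra.
Qed.

Lemma Phid_bound C : 0 < C -> Phi_d d (C * h) <= 2 * C * Bc C ^+ d * M%:R * h.
Proof.
move=> hC; have hB := Bc_ge1 C.
have hK1 : (1 <= K.+1%:R :> R) by rewrite ler1n.
have hCh : 0 < C * h by rewrite mulr_gt0 // h_gt0.
rewrite /Phi_d.
have hl : logp (C * h) ^+ d <= (Bc C * K.+1%:R) ^+ d.
  apply: lerXn2r; rewrite ?nnegrE ?logp_bound //.
    by rewrite /logp le_max lexx orbT.
  by rewrite mulr_ge0 //; lra.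
have hg : 1 <= (Bc C * K.+1%:R) ^+ d.
  by apply: exprn_ege1; rewrite -[1]mulr1 ler_pM //; lra.
have -> : M%:R = (K.+1%:R : R) ^+ d by rewrite M_eq natrX.
have e : 2 * C * Bc C ^+ d * K.+1%:R ^+ d * h = C * h * (2 * (Bc C * K.+1%:R) ^+ d).
  by rewrite exprMn; ring.
rewrite e ler_pM2l //; lra.
Qed.
End Sp.

Unset Implicit Arguments. Set Strict Implicit.

Theorem mainTheorem8 (R : realType) (n : nat) (hn : (3 <= n)%N)
    (mu : {measure set (n.-tuple R) -> \bar R})
    (hmu : is_lebesgue_measure mu) :
  finite_width
    [set @proj_plane R n (n - 2) (n - 1) A
       | A in @Rtilde R n]
  /\
  (forall Phi : R -> R, orlicz Phi ->
     littleo_at_infty Phi (@Phi_d R (n - 2)) ->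
     ~ weak_LPhi mu (@Rtilde R n) Phi).
Proof.
split; first exact: part1.
move=> Phi hPhi hlo [C hC H].
case: n hn mu hmu H hlo => [|[|d]] // hn mu hmu H hlo.
rewrite (_ : (d.+2 - 2 = d)%N) in hlo; last by lia.
have hB := Bc_ge1 d C.
pose B := Bc d C.
pose Q : R := 4 ^+ d.+2.
have hQ : 0 < Q by rewrite exprn_gt0.
have hBd : 0 < B ^+ d by rewrite exprn_gt0 //; apply: lt_le_trans hB; exact: ltr01.
pose eps : R := (8 * C * B ^+ d * Q)^-1.
have heps : 0 < eps.
  by rewrite /eps invr_gt0; apply: mulr_gt0 => //; apply: mulr_gt0 => //; apply: mulr_gt0.
have [Me hMe] := hlo eps heps.
have [K hK] : exists K : nat, `|Me| / C < K%:R.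
  exists (Num.Def.archi_bound (`|Me| / C)); apply: archi_boundP.
  by rewrite divr_ge0 // ltW.
pose hh : R := 2 ^+ ((d.+1 * K) * d.+1).+1.
pose MM : R := (#|{: (d.+2 - 2).-tuple 'I_K.+1}|)%:R.
have k1 : MM * hh <= 2 * Q * Phi (C * hh) := key1 hmu K hPhi hC H.
have pb : Phi_d d (C * hh) <= 2 * C * B ^+ d * MM * hh := Phid_bound d K hC.
have kh : K%:R < hh := K_lt_h R d K.
have hh0 : 0 < hh by rewrite exprn_gt0.
have hMM : 0 < MM by rewrite /MM M_eq ltr0n expn_gt0.
have hCh : Me <= C * hh.
  apply: le_trans (ler_norm Me) _.
  have : `|Me| < C * K%:R by move: hK; rewrite ltr_pdivrMr // mulrC.
  move=> h1; apply/ltW/(lt_trans h1); rewrite ltr_pM2l //.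
have := hMe _ hCh.
have [Phi0 Phige0 _ _] := hPhi.
have hCh0 : 0 <= C * hh by rewrite mulr_ge0 // ltW.
have hPd0 : 0 <= Phi_d d (C * hh).
  rewrite /Phi_d mulr_ge0 // addr_ge0 // exprn_ge0 //.
  by rewrite /logp le_max lexx orbT.
rewrite !ger0_norm // ?Phige0 // => hP.
have hP2 : Phi (C * hh) <= eps * (2 * C * B ^+ d * MM * hh).
  by apply: le_trans hP _; rewrite ler_wpM2l // ltW.
have eS : eps * (2 * C * B ^+ d * MM * hh) = MM * hh / (4 * Q).
  rewrite /eps; field.
  by rewrite (gt_eqF hQ) (gt_eqF hBd) (gt_eqF hC).
rewrite eS in hP2.
have hP3 : 2 * Q * Phi (C * hh) <= MM * hh / 2.
  have -> : MM * hh / 2 = 2 * Q * (MM * hh / (4 * Q)) by field; rewrite (gt_eqF hQ).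
  by rewrite ler_wpM2l // mulr_ge0 // ltW.
have hX : 0 < MM * hh by rewrite mulr_gt0.
lra.
Qed.
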